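(* Let $N\in\mathbb{N}$ and let $Q_N$ be a probability distribution on $\mathbb{N}\cup\{\infty\}$ with probability generating function $\varphi_{Q_N}(x)=\sum_{k\ge1}x^kQ_N(\{k\})$. In the Wright–Fisher graph with selection $Q_N$ described in the context, the type-0 allele frequency process $(X^N_g)_{g\in\mathbb{N}}$ is a time-homogeneous Markov chain on $\{0,1/N,\dots,(N-1)/N,1\}$ with transition probabilities $$\mathbb{P}\big(X^N_g=m/N\mid X^N_{g-1}=x\big)=\binom{N}{m}\varphi_{Q_N}(x)^m\big(1-\varphi_{Q_N}(x)\big)^{N-m},\qquad m=0,1,\dots,N,$$ for every $x\in\{0,1/N,\dots,1\}$.
   Context: Wright–Fisher graph with selection $Q_N$: generations are indexed by $g\in\mathbb{Z}$, each consisting of $N$ individuals labelled $1,\dots,N$; write $v=(g,i)$. Each individual $v$ independently draws a number $K_v$ with law $Q_N$ (the $K_v$ are i.i.d.), and, given $K_v=k$, chooses $k$ labels $L_{(v,1)},\dots,L_{(v,k)}$ independently and uniformly at random from $\{1,\dots,N\}$ (with replacement, all choices independent across individuals and of the $K$'s); the individuals $(g-1,L_{(v,j)})$ are the potential parents of $v$. Types lie in $\{0,1\}$: the individuals of generation $0$ are assigned types arbitrarily, and for every $g\ge1$ an individual of generation $g$ has type $0$ if and only if all of its potential parents have type $0$ (otherwise type $1$). $X^N_g$ denotes the fraction of type-$0$ individuals in generation $g$. *)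

(* Defs.v *)
From HB Require Import structures.
From mathcomp Require Import all_boot all_order all_algebra.
From mathcomp Require Import all_classical all_reals all_analysis.
Set Implicit Arguments. Unset Strict Implicit. Unset Printing Implicit Defensive.
Import Order.TTheory GRing.Theory Num.Theory.
Local Open Scope classical_set_scope.
Local Open Scope ring_scope.

(* Values of K_v live in N ∪ {∞}, encoded as [option nat]:
   [Some k] = the finite value k, [None] = ∞. *)

(* Probability generating function
     phi_Q(x) = sum_{k>=1} x^k Q({k})  (+ x^∞ Q({∞}) with x^∞ := lim_k x^k,
   i.e. x^∞ = 1 if x = 1 and 0 for 0 <= x < 1). *)
Definition pgf (R : realType) (Q : option nat -> R) (x : R) : R :=
  \big[+%R/0%R]_(1 <= k <oo) (x ^+ k * Q (Some k))
  + (if x == 1 then Q None else 0).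

(* Type of individual (g, i): [true] iff type 0.
   Generation 0 has the arbitrary types [init];
   K g i w    = number K_(g,i) of potential parents of individual (g,i);
   L g i j w  = label L_((g,i),j) of its j-th potential parent (in generation g-1);
   only the first K_(g,i) labels are used (all of them if K_(g,i) = ∞). *)
Fixpoint type0 (N : nat) (T : Type) (init : 'I_N -> bool)
  (K : nat -> 'I_N -> T -> option nat) (L : nat -> 'I_N -> nat -> T -> 'I_N)
  (g : nat) (i : 'I_N) (w : T) {struct g} : bool :=
  match g with
  | 0 => init i
  | g'.+1 =>
      match K g i w with
      | Some k => [forall j : 'I_k, type0 init K L g' (L g i j w) w]
      | None => `[< forall j : nat, type0 init K L g' (L g i j w) w >]
      end
  end.

Definition freq0 (R : realType) (N : nat) (T : Type) (init : 'I_N -> bool)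
  (K : nat -> 'I_N -> T -> option nat) (L : nat -> 'I_N -> nat -> T -> 'I_N)
  (g : nat) (w : T) : R :=
  (#|[set i : 'I_N | type0 init K L g i w]|)%:R / N%:R.

(* The family (K_v)_v, (L_(v,j))_(v,j) is mutually independent, each K_v has
   law Q and each L_(v,j) is uniform on {1..N}: the joint probability of any
   finite collection of (distinct) variables taking prescribed values factorizes. *)
Definition WF_iid (R : realType) (d : measure_display) (T : measurableType d)
  (P : probability T R) (N : nat) (Q : option nat -> R)
  (K : nat -> 'I_N -> T -> option nat) (L : nat -> 'I_N -> nat -> T -> 'I_N) : Prop :=
  (forall g i a, measurable [set w | K g i w = a]) /\
  (forall g i j b, measurable [set w | L g i j w = b]) /\
  (forall (s : seq (nat * 'I_N)) (t : seq (nat * 'I_N * nat))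
          (a : nat * 'I_N -> option nat) (b : nat * 'I_N * nat -> 'I_N),
      uniq s -> uniq t ->
      P [set w | (forall v, v \in s -> K v.1 v.2 w = a v) /\
                 (forall u, u \in t -> L u.1.1 u.1.2 u.2 w = b u)]
      = ((\prod_(v <- s) Q (a v)) * (N%:R^-1) ^+ size t)%:E).

(* Main.v *)
Require Import Defs.
From HB Require Import structures.
From mathcomp Require Import all_boot all_order all_algebra.
From mathcomp Require Import all_classical all_reals all_analysis.
From mathcomp Require Import ring lra zify.

Module PartA.
Set Implicit Arguments. Unset Strict Implicit. Unset Printing Implicit Defensive.
Import Order.TTheory GRing.Theory Num.Theory.
Import numFieldNormedType.Exports.
Local Open Scope classical_set_scope.
Local Open Scope ring_scope.

Section MuLemmas.
Context (R : realType) (d : measure_display) (T : measurableType d)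
  (P : probability T R).

Definition mu (A : set T) : R := fine (P A).

Lemma muE A : measurable A -> P A = (mu A)%:E.
Proof. by move=> mA; rewrite /mu fineK // fin_num_measure. Qed.

Lemma mu_ge0 A : 0 <= mu A.
Proof. by rewrite /mu fine_ge0 // measure_ge0. Qed.

Lemma mu_setT : mu setT = 1.
Proof. by rewrite /mu probability_setT. Qed.

Lemma mu_set0 : mu set0 = 0.
Proof. by rewrite /mu measure0. Qed.

Lemma muU A B : measurable A -> measurable B -> A `&` B = set0 ->
  mu (A `|` B) = mu A + mu B.
Proof.
move=> mA mB AB; rewrite /mu measureU // fineD //; exact: fin_num_measure.
Qed.

Lemma mu_le A B : measurable A -> measurable B -> A `<=` B -> mu A <= mu B.
Proof.
move=> mA mB AB; rewrite -lee_fin -!muE //.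
by apply: le_measure => //; rewrite inE.
Qed.

Lemma mu_le1 A : measurable A -> mu A <= 1.
Proof. by move=> mA; rewrite -mu_setT; apply: mu_le => //. Qed.

Lemma mu_setC A : measurable A -> mu (~` A) = 1 - mu A.
Proof.
move=> mA; rewrite -mu_setT -(setUv A) muU //; first by rewrite addrC addKr.
  exact: measurableC.
by rewrite setICr.
Qed.

Lemma meas_all (I : eqType) (s : seq I) (F : I -> set T) :
  (forall x, measurable (F x)) -> measurable [set w | forall x, x \in s -> F x w].
Proof.
move=> mF; elim: s => [|x s IH].
  rewrite (_ : [set w | _] = setT) //; apply/seteqP; split => w //= _.
rewrite (_ : [set w | _] = F x `&` [set w | forall y, y \in s -> F y w]).
  exact: measurableI.
apply/seteqP; split => w /=.
  by move=> H; split; [apply: H; rewrite mem_head | move=> y ys; apply: H; rewrite in_cons ys orbT].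
by move=> [Fx H] y; rewrite in_cons => /orP [/eqP -> //| /H].
Qed.

Lemma meas_fin_all (I : finType) (F : I -> set T) :
  (forall x, measurable (F x)) -> measurable [set w | forall x, F x w].
Proof.
move=> mF; rewrite (_ : [set w | _] = [set w | forall x, x \in enum I -> F x w]).
  exact: meas_all.
by apply/seteqP; split => w /= H x // ; apply: H; rewrite mem_enum.
Qed.

Lemma mu_fib (O : eqType) (f : T -> O) (s : seq O) :
  (forall o, measurable [set w | f w = o]) -> uniq s ->
  measurable [set w | f w \in s] /\
  mu [set w | f w \in s] = \sum_(o <- s) mu [set w | f w = o].
Proof.
move=> mf; elim: s => [|o s IH] /=.
  rewrite (_ : [set w | _] = set0) ?big_nil ?mu_set0 //.
  by apply/seteqP; split => w //=; rewrite in_nil.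
move=> /andP [os us]; have [ms e] := IH us.
rewrite (_ : [set w | _] = [set w | f w = o] `|` [set w | f w \in s]).
  split; first exact: measurableU.
  rewrite muU // ?big_cons ?e //; apply/seteqP; split => w //= [fo fs].
  by move: os; rewrite -fo fs.
apply/seteqP; split => w /=; rewrite in_cons.
  by move=> /orP [/eqP|]; [left|right].
by move=> [->|->]; rewrite ?eqxx ?orbT.
Qed.

Lemma mu_fibF (O : finType) (f : T -> O) (A : pred O) :
  (forall o, measurable [set w | f w = o]) ->
  measurable [set w | A (f w)] /\
  mu [set w | A (f w)] = \sum_(o | A o) mu [set w | f w = o].
Proof.
move=> mf; have [m e] := mu_fib mf (enum_uniq A).
rewrite (_ : [set w | A (f w)] = [set w | f w \in enum A]); last first.
  by apply/seteqP; split => w /=; rewrite mem_enum.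
split => //; rewrite e big_enum_cond /=; by apply: eq_bigl => o; rewrite andbT.
Qed.


Lemma mu_split X B : measurable X -> measurable B ->
  mu X = mu (X `&` B) + mu (X `&` ~` B).
Proof.
move=> mX mB; rewrite -muU; first by rewrite -setIUr setUv setIT.
- exact: measurableI.
- by apply: measurableI => //; exact: measurableC.
- by rewrite setIACA setICr setI0.
Qed.

Lemma mu_cvg (A_ : nat -> set T) (A : set T) :
  (forall n, measurable (A_ n)) ->
  (forall w, exists n0, forall n, (n0 <= n)%N -> (A_ n w <-> A w)) ->
  measurable A /\ ((fun n => mu (A_ n)) @ \oo --> (mu A : R)).
Proof.
move=> mA ev.
have mA' : measurable A.
  rewrite (_ : A = \bigcup_n0 \bigcap_(n in [set n | (n0 <= n)%N]) A_ n).
    apply: bigcupT_measurable => n0; apply: bigcap_measurable; first by exists n0 => /=.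
    by move=> k _; exact: mA.
  apply/seteqP; split => w.
    move=> Aw; have [n0 H] := ev w; exists n0 => // n /= n0n; exact/(H n n0n).
  move=> [n0 _ H]; have [n1 H1] := ev w; apply/(H1 (maxn n0 n1)); first by rewrite leq_maxr.
  by apply: H; rewrite /= leq_maxl.
split => //.
pose B n := \bigcap_(k in [set k | (n <= k)%N]) ((A_ k `&` A) `|` (~` A_ k `&` ~` A)).
have mB n : measurable (B n).
  apply: bigcap_measurable; first by exists n => /=.
  move=> k _; apply: measurableU; apply: measurableI => //; exact: measurableC.
have ndB : nondecreasing_seq B.
  move=> n m nm; apply/subsetPset => w Bw k /= mk; apply: Bw; exact: leq_trans nm mk.
have UB : \bigcup_n B n = setT.
  apply/seteqP; split => // w _; have [n0 H] := ev w; exists n0 => // k /= n0k.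
  have := H k n0k; case: (pselect (A w)) => Aw.
    by move=> [_ h]; left; split => //; exact: h.
  by move=> [h _]; right; split => // /h.
have cB : (fun n => mu (B n)) @ \oo --> (1 : R).
  have mU : measurable (\bigcup_n B n) by rewrite UB.
  have := @nondecreasing_cvg_mu _ _ _ P _ mB mU ndB; rewrite UB.
  move=> h.
  rewrite [X in _ --> X](_ : _ = 1%E) in h; last exact: probability_setT.
  exact: (fine_cvg h).
move/cvgrPdist_le : cB => cB.
apply/cvgrPdist_le => e e0; near=> n.
apply: (@le_trans _ _ (`|1 - mu (B n)|)); last by near: n; exact: cB.
have eq : A `&` B n = A_ n `&` B n.
  apply/seteqP; split => w [h1 h2]; split => //; have := h2 n (leqnn n); case => [[]|[]] //.
have mBC : measurable (~` B n) by exact: measurableC.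
have h1 := mu_split mA' (mB n); have h2 := mu_split (mA n) (mB n).
have l1 : mu (A `&` ~` B n) <= mu (~` B n) by apply: mu_le => //; exact: measurableI.
have l2 : mu (A_ n `&` ~` B n) <= mu (~` B n) by apply: mu_le => //; exact: measurableI.
rewrite mu_setC // in l1 l2.
have g1 := mu_ge0 (A `&` ~` B n); have g2 := mu_ge0 (A_ n `&` ~` B n).
have g3 := mu_le1 (mB n).
rewrite h1 h2 eq; rewrite ler_norml lerNl ger0_norm; last by rewrite subr_ge0.
apply/andP; split; lra.
Unshelve. all: by end_near.
Qed.


Lemma mu_fibD (O : finType) (f : T -> O) (D : set T) :
  measurable D -> (forall o, measurable [set w | f w = o]) ->
  mu D = \sum_(o : O) mu (D `&` [set w | f w = o]).
Proof.
move=> mD mf.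
suff H : forall s : seq O, uniq s ->
  mu (D `&` [set w | f w \in s]) = \sum_(o <- s) mu (D `&` [set w | f w = o]).
  rewrite -big_enum /= -H ?enum_uniq //; apply: f_equal; apply/seteqP; split => w /=.
    by move=> Dw; split => //; rewrite mem_enum.
  by case.
elim => [|o s IH] /=.
  rewrite big_nil (_ : _ `&` _ = set0) ?mu_set0 //.
  by apply/seteqP; split => w //= [].
move=> /andP [os us]; rewrite big_cons -IH //.
have ms : measurable (D `&` [set w | f w \in s]).
  apply: measurableI => //.
  rewrite (_ : [set w | f w \in s] = \big[setU/set0]_(o <- s) [set w | f w = o]).
    by apply: bigsetU_measurable => o0 _; exact: mf.
  apply/seteqP; split => w /=.
    by move=> fs; rewrite -bigcup_seq; exists (f w).
  by rewrite -bigcup_seq; case=> o0 os0 fo; rewrite /= fo.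
rewrite -muU //; first (apply: f_equal; apply/seteqP; split => w /=).
- by move=> [Dw]; rewrite in_cons => /orP [/eqP|]; [left|right].
- by move=> [[Dw fo]|[Dw fs]]; split => //; rewrite in_cons ?fo ?eqxx ?fs ?orbT.
- exact: measurableI.
- by apply/seteqP; split => w //= [[_ fo] [_ fs]]; move: os; rewrite -fo fs.
Qed.
End MuLemmas.

End PartA.
Import PartA.

Module PartB.
Set Implicit Arguments. Unset Strict Implicit. Unset Printing Implicit Defensive.
Import Order.TTheory GRing.Theory Num.Theory.

Lemma fin_ev (I : finType) (Pr : I -> nat -> Prop) :
  (forall i, exists n0, forall n, (n0 <= n)%N -> Pr i n) ->
  exists n0, forall n, (n0 <= n)%N -> forall i, Pr i n.
Proof.
move=> H.
suff [n0 Hn0] : exists n0, forall n, (n0 <= n)%N -> forall i, i \in enum I -> Pr i n.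
  by exists n0 => n /Hn0 h i; apply: h; rewrite mem_enum.
elim: (enum I) => [|x s [n0 IH]]; first by exists 0%N.
have [n1 H1] := H x; exists (maxn n0 n1) => n; rewrite geq_max => /andP [h0 h1] i.
by rewrite in_cons => /orP [/eqP -> | /(IH n h0)] //; apply: H1.
Qed.

Section Model.
Context (N : nat) (T : Type) (K : nat -> 'I_N -> T -> option nat)
  (L : nat -> 'I_N -> nat -> T -> 'I_N) (init : 'I_N -> bool).

Definition kc (n h : nat) (i : 'I_N) (w : T) : nat :=
  match K h i w with Some k => minn k n | None => n end.

Lemma kc_le n h i w : (kc n h i w <= n)%N.
Proof. by rewrite /kc; case: (K h i w) => [k|] //; rewrite geq_minr. Qed.

Fixpoint tt (n h : nat) (i : 'I_N) (w : T) : bool :=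
  match h with
  | 0 => init i
  | h'.+1 => [forall j : 'I_n, (j < kc n h'.+1 i w)%N ==> tt n h' (L h'.+1 i j w) w]
  end.

Lemma tt_ev w h : exists n0, forall n, (n0 <= n)%N ->
  forall h', (h' <= h)%N -> forall i, tt n h' i w = type0 init K L h' i w.
Proof.
elim: h => [|h [n0 IH]].
  by exists 0%N => n _ h'; rewrite leqn0 => /eqP ->.
have step : forall i, exists n1, forall n, (n1 <= n)%N ->
    tt n h.+1 i w = type0 init K L h.+1 i w.
  move=> i /=; rewrite /kc.
  case: (K h.+1 i w) => [k|].
    exists (maxn n0 k) => n; rewrite geq_max => /andP [h0 hk].
    rewrite (minn_idPl hk).
    apply/forallP/forallP.
      move=> H j; have jn : (j < n)%N by exact: leq_trans (ltn_ord j) hk.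
      by have := H (Ordinal jn); rewrite /= (ltn_ord j) /= (IH n h0 h (leqnn h)).
    move=> H j; apply/implyP => jk; rewrite (IH n h0 h (leqnn h)).
    exact: (H (Ordinal jk)).
  case: (pselect (forall j, type0 init K L h (L h.+1 i j w) w)) => Hall.
    exists n0 => n h0; rewrite (asboolT Hall).
    by apply/forallP => j; rewrite ltn_ord /= (IH n h0 h (leqnn h)).
  have [j0 Hj0] := (existsNP _).2 Hall.
  exists (maxn n0 j0.+1) => n; rewrite geq_max => /andP [h0 hj].
  rewrite (asboolF Hall); apply/negbTE/negP => /forallP /(_ (Ordinal hj)).
  by rewrite /= hj /= (IH n h0 h (leqnn h)).
have [n1 H1] := fin_ev step.
exists (maxn n0 n1) => n; rewrite geq_max => /andP [h0 h1] h'.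
rewrite leq_eqVlt => /orP [/eqP -> i| hh i]; first exact: H1.
by apply: IH.
Qed.

Section Obs.
Context (n : nat).
Definition X := ('I_n.+1 * {ffun 'I_n -> 'I_N})%type.

Definition ob (h : nat) (w : T) : {ffun 'I_N -> X} :=
  [ffun i => (inord (kc n h i w), [ffun j : 'I_n => L h i j w])].

Definition good (S : {set 'I_N}) (x : X) : bool :=
  [forall j : 'I_n, (j < x.1)%N ==> (x.2 j \in S)].

Definition nxt (S : {set 'I_N}) (o : {ffun 'I_N -> X}) : {set 'I_N} :=
  [set i | good S (o i)].

Context (g : nat).

Fixpoint St (o1 : {ffun 'I_g -> {ffun 'I_N -> X}}) (h : nat) : {set 'I_N} :=
  match h with
  | 0 => [set i | init i]
  | h'.+1 => match insub h' with
             | Some hh => nxt (St o1 h') (o1 hh)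
             | None => St o1 h'
             end
  end.

Definition O1 (w : T) : {ffun 'I_g -> {ffun 'I_N -> X}} :=
  [ffun hh : 'I_g => ob hh.+1 w].

Lemma nxt_ob h w : nxt [set i | tt n h i w] (ob h.+1 w) = [set i | tt n h.+1 i w].
Proof.
apply/setP => i; rewrite !inE /good /ob /= !ffunE /=.
rewrite inordK ?ltnS ?kc_le //.
by apply: eq_forallb => j; rewrite ffunE inE.
Qed.

Lemma St_tt w h : (h <= g)%N -> St (O1 w) h = [set i | tt n h i w].
Proof.
elim: h => [|h IH] hg /=; first by apply/setP => i; rewrite !inE.
case: insubP => [hh _ hhv|]; last by rewrite hg.
rewrite IH ?(ltnW hg) // ffunE /= hhv.
exact: nxt_ob.
Qed.

End Obs.
End Model.

End PartB.
Import PartB.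

Module PartC.
Set Implicit Arguments. Unset Strict Implicit. Unset Printing Implicit Defensive.
Import Order.TTheory GRing.Theory Num.Theory.
Import numFieldNormedType.Exports.
Local Open Scope classical_set_scope.
Local Open Scope ring_scope.

Section Cyl.
Context (R : realType) (d : measure_display) (T : measurableType d)
  (P : probability T R) (N : nat) (Q : option nat -> R)
  (K : nat -> 'I_N -> T -> option nat) (L : nat -> 'I_N -> nat -> T -> 'I_N)
  (WF : WF_iid P Q K L) (n : nat).

Definition qn (c : nat) : R :=
  if (c < n)%N then Q (Some c) else 1 - \sum_(c' < n) Q (Some (val c')).

Lemma kc_lt h i w c : (c < n)%N -> (kc K n h i w = c <-> K h i w = Some c).
Proof.
rewrite /kc => cn; case: (K h i w) => [k|]; split => //.
- move=> e; congr Some; move: e cn; case: (leqP k n) => kn.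
    by move=> ->.
  by move=> <-; rewrite ltnn.
- by case=> ->; rewrite (minn_idPl (ltnW cn)).
- by move=> e; move: cn; rewrite e ltnn.
Qed.

Lemma kc_n h i w : (kc K n h i w = n <-> forall c : 'I_n, K h i w <> Some (val c)).
Proof.
rewrite /kc; case: (K h i w) => [k|]; split => //.
- move=> e c [kc]; have := ltn_ord c; rewrite -kc => kn.
  by move: e; rewrite (minn_idPl (ltnW kn)) => e; move: kn; rewrite e ltnn.
- move=> H; apply/minn_idPr; rewrite leqNgt; apply/negP => kn.
  exact: (H (Ordinal kn)).
Qed.

Lemma measK h i a : measurable [set w | K h i w = a].
Proof. exact: (WF.1 h i a). Qed.

Lemma measL h i j b : measurable [set w | L h i j w = b].
Proof. exact: (WF.2.1 h i j b). Qed.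

Lemma meas_kc h i c : measurable [set w | kc K n h i w = c].
Proof.
case: (ltngtP c n) => cn.
- rewrite (_ : [set w | _] = [set w | K h i w = Some c]); first exact: measK.
  by apply/seteqP; split => w /=; rewrite kc_lt.
- rewrite (_ : [set w | _] = set0) //; apply/seteqP; split => w //= e.
  by have := kc_le K n h i w; rewrite e leqNgt cn.
- rewrite (_ : [set w | _] = [set w | forall c' : 'I_n, (~` [set w | K h i w = Some (val c')]) w]).
    by apply: meas_fin_all => c'; apply: measurableC; exact: measK.
  by apply/seteqP; split => w /=; rewrite cn kc_n.
Qed.

Definition Zset (s1 : seq (nat * 'I_N)) (a : nat * 'I_N -> option nat)
  (s2 : seq (nat * 'I_N)) (cls : nat * 'I_N -> nat)
  (t : seq (nat * 'I_N * nat)) (b : nat * 'I_N * nat -> 'I_N) : set T :=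
  [set w | (forall v, v \in s1 -> K v.1 v.2 w = a v) /\
           (forall v, v \in s2 -> kc K n v.1 v.2 w = cls v) /\
           (forall u, u \in t -> L u.1.1 u.1.2 u.2 w = b u)].

Lemma measZ s1 a s2 cls t b : measurable (Zset s1 a s2 cls t b).
Proof.
apply: measurableI; first by apply: meas_all => v; exact: measK.
apply: measurableI; first by apply: meas_all => v; exact: meas_kc.
by apply: meas_all => u; exact: measL.
Qed.


Lemma inord_kc h i w (o : 'I_n.+1) :
  ((inord (kc K n h i w) : 'I_n.+1) = o) <-> kc K n h i w = val o.
Proof.
split => [<-|->]; last exact: inord_val.
by apply/esym/inordK; rewrite ltnS kc_le.
Qed.

Lemma cylgen (t : seq (nat * 'I_N * nat)) b cls (s2 : seq (nat * 'I_N)) :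
  forall s1 a, uniq (s1 ++ s2) -> uniq t -> (forall v, v \in s2 -> (cls v <= n)%N) ->
  mu P (Zset s1 a s2 cls t b) =
  \prod_(v <- s1) Q (a v) * \prod_(v <- s2) qn (cls v) * (N%:R^-1) ^+ size t.
Proof.
elim: s2 => [|v s2 IH] s1 a.
  rewrite cats0 => us1 ut _; rewrite /mu /Zset.
  rewrite (_ : [set w | _] = [set w | (forall v, v \in s1 -> K v.1 v.2 w = a v) /\
       (forall u, u \in t -> L u.1.1 u.1.2 u.2 w = b u)]).
    by rewrite (WF.2.2 s1 t a b us1 ut) /= big_nil mulr1.
  apply/seteqP; split => w /=; first by move=> [h1 [h2 h3]].
  by move=> [h1 h3]; split => //; split.
move=> us ut hcls.
have us' : uniq (v :: (s1 ++ s2)) by move: us; rewrite -cat1s uniq_catCA.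
move: us' => /= /andP [vs12 us12].
have vs1 : v \notin s1 by move: vs12; rewrite mem_cat negb_or => /andP [].
have us1' : uniq ((v :: s1) ++ s2) by rewrite /= vs12 us12.
have hcls' : forall u, u \in s2 -> (cls u <= n)%N.
  by move=> u us2; apply: hcls; rewrite in_cons us2 orbT.
pose a' c := fun u => if u == v then Some c else a u.
have Zc : forall c, (c < n)%N -> Zset (v :: s1) (a' c) s2 cls t b =
    Zset s1 a s2 cls t b `&` [set w | kc K n v.1 v.2 w = c].
  move=> c cn; apply/seteqP; split => w /=.
    move=> [h1 [h2 h3]]; split; last first.
      by apply/kc_lt => //; have := h1 v (mem_head _ _); rewrite /a' eqxx.
    split => //; move=> u us1; have := h1 u; rewrite in_cons us1 orbT /a'.
    case: eqP => [uv|_]; last by apply.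
    by move: vs1; rewrite -uv us1.
  move=> [[h1 [h2 h3]] hk]; split => //; move=> u; rewrite in_cons /a'.
  case: eqP => [-> _|_ /= us1]; last exact: h1.
  by apply/kc_lt.
have eqc : forall c, (c < n)%N -> mu P (Zset (v :: s1) (a' c) s2 cls t b) =
    Q (Some c) * ((\prod_(u <- s1) Q (a u)) * \prod_(u <- s2) qn (cls u) * (N%:R^-1) ^+ size t).
  move=> c cn; rewrite IH // big_cons /a' eqxx !mulrA; congr (_ * _ * _).
  congr (_ * _); apply: eq_big_seq => u us1; case: eqP => // uv.
  by move: vs1; rewrite -uv us1.
have eqZ : Zset s1 a (v :: s2) cls t b =
    Zset s1 a s2 cls t b `&` [set w | kc K n v.1 v.2 w = cls v].
  apply/seteqP; split => w /=.
    move=> [h1 [h2 h3]]; split; last by apply: h2; rewrite mem_head.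
    by split => //; split => // u us2; apply: h2; rewrite in_cons us2 orbT.
  move=> [[h1 [h2 h3]] hk]; split => //; split => // u; rewrite in_cons.
  by case/orP => [/eqP ->|]; [| exact: h2].
case: (ltngtP (cls v) n) => cv.
- rewrite eqZ -Zc // eqc // big_cons /qn cv; ring.
- by have := hcls v (mem_head _ _); rewrite leqNgt cv.
have IH0 := IH s1 a us12 ut hcls'.
pose f w := (inord (kc K n v.1 v.2 w) : 'I_n.+1).
have mf : forall o, measurable [set w | f w = o].
  move=> o; rewrite (_ : [set w | f w = o] = [set w | kc K n v.1 v.2 w = val o]).
    exact: meas_kc.
  by apply/seteqP; split => w /=; rewrite inord_kc.
rewrite (mu_fibD P (measZ _ _ _ _ _ _) mf) big_ord_recr /= in IH0.
have E1 : Zset s1 a s2 cls t b `&` [set w | f w = ord_max] = Zset s1 a (v :: s2) cls t b.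
  rewrite eqZ cv; congr (_ `&` _); apply/seteqP; split => w /=; by rewrite inord_kc.
rewrite E1 in IH0.
have Hs : \sum_(c < n) mu P (Zset s1 a s2 cls t b `&` [set w | f w = widen_ord (leqnSn n) c]) =
    (\sum_(c < n) Q (Some (val c))) *
    ((\prod_(u <- s1) Q (a u)) * \prod_(u <- s2) qn (cls u) * (N%:R^-1) ^+ size t).
  rewrite mulr_suml; apply: eq_bigr => c _.
  rewrite -(eqc c (ltn_ord c)) (Zc c (ltn_ord c)); congr (mu P (_ `&` _)); apply/seteqP; split => w /=;
    by rewrite inord_kc.
rewrite Hs in IH0.
rewrite big_cons /qn cv ltnn.
set S := \sum_(c < n) _ in IH0 *.
set Z := mu P _ in IH0 *.
set X := \prod_(u <- s1) _ in IH0 *.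
set Y := \prod_(u <- s2) _ in IH0 *.
set W := _ ^+ size t in IH0 *.
have -> : Z = X * Y * W - S * (X * Y * W) by rewrite -{1}IH0 [_ + Z]addrC addrK.
ring.
Qed.

End Cyl.

End PartC.
Import PartC.

Module PartD.
Set Implicit Arguments. Unset Strict Implicit. Unset Printing Implicit Defensive.
Import Order.TTheory GRing.Theory Num.Theory.
Import numFieldNormedType.Exports.
Local Open Scope classical_set_scope.
Local Open Scope ring_scope.

Lemma prod_const_seq (R : comRingType) (I : Type) (s : seq I) (c : R) :
  \prod_(h <- s) c = c ^+ size s.
Proof. by elim: s => [|x s IH]; rewrite ?big_nil ?big_cons ?IH ?exprS. Qed.

Section CylOb.
Context (R : realType) (d : measure_display) (T : measurableType d)
  (P : probability T R) (N : nat) (Q : option nat -> R)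
  (K : nat -> 'I_N -> T -> option nat) (L : nat -> 'I_N -> nat -> T -> 'I_N)
  (WF : WF_iid P Q K L) (n : nat).

Definition Wt (x : {ffun 'I_N -> X N n}) : R :=
  \prod_(i : 'I_N) (qn Q n (x i).1 * (N%:R^-1) ^+ n).

Lemma cyl_ob (hs : seq nat) (oo : nat -> {ffun 'I_N -> X N n}) : uniq hs ->
  measurable [set w | forall h, h \in hs -> ob K L n h w = oo h] /\
  mu P [set w | forall h, h \in hs -> ob K L n h w = oo h] = \prod_(h <- hs) Wt (oo h).
Proof.
move=> uhs.
pose s2 := [seq (h, i) | h <- hs, i <- index_enum 'I_N].
pose t := [seq (hi.1, hi.2, val j) | hi <- s2, j <- index_enum 'I_n].
pose cls (v : nat * 'I_N) := val (oo v.1 v.2).1.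
pose b (u : nat * 'I_N * nat) :=
  if insub u.2 is Some j then (oo u.1.1 u.1.2).2 j else u.1.2.
have us2 : uniq s2.
  apply: allpairs_uniq => //; first exact: index_enum_uniq.
  by move=> [? ?] [? ?] _ _.
have ut : uniq t.
  apply: allpairs_uniq => //; first exact: index_enum_uniq.
  by move=> [[? ?] ?] [[? ?] ?] _ _ /= [-> -> /val_inj ->].
have eqS : [set w | forall h, h \in hs -> ob K L n h w = oo h] =
    Zset K L n [::] (fun _ => None) s2 cls t b.
  apply/seteqP; split => w /=.
    move=> H; split => //; split.
      move=> v /allpairsP [[h i] [/= hh _ ->]].
      by have := congr1 (fun f : {ffun 'I_N -> X N n} => (f i).1) (H h hh); rewrite /ob ffunE /= => /inord_kc.
    move=> u /allpairsP [[[h i] j] [/= /allpairsP [[h' i'] [/= hh _ [-> ->]]] _ ->]].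
    have := congr1 (fun f : {ffun 'I_N -> X N n} => (f i').2 j) (H h' hh); rewrite /ob ffunE /= ffunE => ->.
    by rewrite /b /= valK.
  move=> [_ [Hk HL]] h hh; apply/ffunP => i; rewrite /ob ffunE.
  have k1 := Hk (h, i) (allpairs_f pair hh (mem_index_enum i)).
  have l1 : forall j : 'I_n, L h i j w = (oo h i).2 j.
    move=> j; have mt : (h, i, val j) \in t.
      by apply/allpairsP; exists ((h, i), j); split => //; apply/allpairsP; exists (h, i).
    by have := HL _ mt; rewrite /b /= valK.
  move: k1 l1; rewrite /cls /=; case: (oo h i) => c l /= k1 l1.
  congr (_, _); first by apply/inord_kc.
  by apply/ffunP => j; rewrite ffunE l1.
rewrite eqS; split; first exact: (measZ WF).
rewrite (cylgen WF) //; last by move=> v _; rewrite /cls -ltnS ltn_ord.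
rewrite big_nil mul1r big_allpairs_dep /=.
rewrite /Wt.
under [X in _ = X]eq_bigr do rewrite big_split /= prodr_const card_ord.
rewrite big_split /= prod_const_seq -!exprM.
congr (_ * _ ^+ _).
rewrite /t !size_allpairs /s2 [index_enum _]unlock -!enumT -!cardT !card_ord.
rewrite [index_enum _]unlock -enumT -cardT card_ord.
by rewrite mulnC [(size hs * N)%N]mulnC.
Qed.

End CylOb.

End PartD.
Import PartD.

Module PartE.
Set Implicit Arguments. Unset Strict Implicit. Unset Printing Implicit Defensive.
Import Order.TTheory GRing.Theory Num.Theory.
Local Open Scope ring_scope.

Section Alg.
Context (R : numFieldType).

Lemma prod_ind (I : finType) (b : I -> bool) :
  \prod_(i : I) ((b i)%:R : R) = ([forall i, b i])%:R.
Proof.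
case: (boolP [forall i, b i]) => H.
  by rewrite big1 // => i _; rewrite (forallP H i).
by move/forallPn: H => [i nbi]; rewrite (bigD1 i) //= (negbTE nbi) mul0r.
Qed.

Lemma sum_ffun_prod (I X : finType) (r : X -> R) :
  \sum_(f : {ffun I -> X}) \prod_(i : I) r (f i) = (\sum_(x : X) r x) ^+ #|I|.
Proof.
by rewrite -(bigA_distr_bigA (fun (i : I) (x : X) => r x)) /= prodr_const.
Qed.

Lemma binom_ffun (I X : finType) (r : X -> R) (gd : pred X) (m : nat) :
  \sum_(f : {ffun I -> X} | #|[set i | gd (f i)]| == m) \prod_(i : I) r (f i) =
  'C(#|I|, m)%:R * (\sum_(x | gd x) r x) ^+ m * (\sum_(x | ~~ gd x) r x) ^+ (#|I| - m).
Proof.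
pose Sf (f : {ffun I -> X}) := [set i | gd (f i)].
rewrite (partition_big Sf (fun A : {set I} => #|A| == m)) //=.
have inner : forall A : {set I},
  \sum_(f : {ffun I -> X} | (#|Sf f| == m) && (Sf f == A)) \prod_(i : I) r (f i) =
  (if #|A| == m then (\sum_(x | gd x) r x) ^+ #|A| * (\sum_(x | ~~ gd x) r x) ^+ (#|I| - #|A|) else 0).
  move=> A.
  have -> : \sum_(f : {ffun I -> X} | (#|Sf f| == m) && (Sf f == A)) \prod_(i : I) r (f i) =
      (#|A| == m)%:R * \sum_(f : {ffun I -> X}) \prod_(i : I) (r (f i) * (gd (f i) == (i \in A))%:R).
    rewrite big_mkcond /= mulr_sumr; apply: eq_bigr => f _.
    rewrite big_split /= prod_ind.
    have -> : [forall i, gd (f i) == (i \in A)] = (Sf f == A).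
      apply/forallP/eqP => [H|<- i]; last by rewrite inE.
      by apply/setP => i; rewrite inE; apply/eqP/H.
    case: (boolP (Sf f == A)) => [/eqP <-|]; rewrite ?andbF ?mulr0 ?mulr1 //.
    by rewrite andbT; case: (_ == m); rewrite ?mul1r ?mul0r.
  have -> : \sum_(f : {ffun I -> X}) \prod_(i : I) (r (f i) * (gd (f i) == (i \in A))%:R) =
      \prod_(i : I) \sum_(x : X) (r x * (gd x == (i \in A))%:R) by rewrite bigA_distr_bigA.
  case: (#|A| == m); rewrite ?mul0r // mul1r.
  rewrite (bigID (fun i => i \in A)) /=.
  have e1 : forall i, i \in A -> \sum_(x : X) r x * (gd x == (i \in A))%:R = \sum_(x | gd x) r x.
    move=> i iA; rewrite iA [RHS]big_mkcond /=; apply: eq_bigr => x _.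
    by case: (gd x); rewrite ?mulr1 ?mulr0.
  have e2 : forall i, i \notin A -> \sum_(x : X) r x * (gd x == (i \in A))%:R = \sum_(x | ~~ gd x) r x.
    move=> i iA; rewrite (negbTE iA) [RHS]big_mkcond /=; apply: eq_bigr => x _.
    by case: (gd x); rewrite ?mulr1 ?mulr0.
  rewrite (eq_bigr _ e1) (eq_bigr _ e2) !prodr_const.
  congr (_ * _ ^+ _).
  rewrite -(cardsC A) addKn; apply: eq_card => i; by rewrite !inE.
rewrite (eq_bigr (fun _ => (\sum_(x | gd x) r x) ^+ m * (\sum_(x | ~~ gd x) r x) ^+ (#|I| - m))); last first.
  by move=> A /eqP hA; rewrite inner hA eqxx.
rewrite sumr_const -mulrA mulr_natl; congr (_ *+ _).
by rewrite -card_draws; apply: eq_card => A; rewrite !inE.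
Qed.

Lemma prod_ifc (n c : nat) (x : R) : (c <= n)%N ->
  \prod_(j < n) (if (j < c)%N then x else 1) = x ^+ c.
Proof.
move=> cn; rewrite -big_mkcond /= (big_ord_narrow cn) /=.
by rewrite prodr_const card_ord.
Qed.

Lemma count_labels (N n c : nat) (S : {set 'I_N}) : (0 < N)%N -> (c <= n)%N ->
  \sum_(l : {ffun 'I_n -> 'I_N} | [forall j : 'I_n, (j < c)%N ==> (l j \in S)])
    ((N%:R : R)^-1) ^+ n = (#|S|%:R / N%:R) ^+ c.
Proof.
move=> N0 cn.
have N0' : (N%:R : R) != 0 by rewrite pnatr_eq0 -lt0n.
rewrite big_mkcond /=.
rewrite (eq_bigr (fun l : {ffun 'I_n -> 'I_N} => \prod_(j : 'I_n) ((N%:R : R)^-1 * ((j < c)%N ==> (l j \in S))%:R))); last first.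
  move=> l _; rewrite big_split /= prod_ind prodr_const card_ord.
  by case: ifP; rewrite ?mulr1 ?mulr0.
have -> : \sum_(l : {ffun 'I_n -> 'I_N}) \prod_(j : 'I_n) ((N%:R : R)^-1 * ((j < c)%N ==> (l j \in S))%:R) =
    \prod_(j : 'I_n) \sum_(b : 'I_N) ((N%:R : R)^-1 * ((j < c)%N ==> (b \in S))%:R) by rewrite bigA_distr_bigA.
rewrite -(prod_ifc _ cn); apply: eq_bigr => j _.
case: ifP => jc /=.
  rewrite -mulr_sumr mulrC; congr (_ * _).
  rewrite -sum1_card natr_sum [RHS]big_mkcond /=; apply: eq_bigr => b _.
  by case: (b \in S).
under eq_bigr do rewrite mulr1.
by rewrite sumr_const card_ord -[_ *+ N]mulr_natr mulVf.
Qed.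

End Alg.

End PartE.
Import PartE.

Module PartF.
Set Implicit Arguments. Unset Strict Implicit. Unset Printing Implicit Defensive.
Import Order.TTheory GRing.Theory Num.Theory.
Import numFieldNormedType.Exports.
Local Open Scope classical_set_scope.
Local Open Scope ring_scope.

Section MainN.
Context (R : realType) (d : measure_display) (T : measurableType d)
  (P : probability T R) (N : nat) (Q : option nat -> R)
  (K : nat -> 'I_N -> T -> option nat) (L : nat -> 'I_N -> nat -> T -> 'I_N)
  (WF : WF_iid P Q K L) (init : 'I_N -> bool) (n g : nat) (Npos : (0 < N)%N).

Definition Ob := ({ffun 'I_g -> {ffun 'I_N -> X N n}} * {ffun 'I_N -> X N n})%type.
Definition Oo (w : T) : Ob := (O1 K L n g w, ob K L n g.+1 w).
Definition W1 (o1 : {ffun 'I_g -> {ffun 'I_N -> X N n}}) : R :=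
  \prod_(hh : 'I_g) Wt Q (o1 hh).

Local Arguments iota : simpl never.
Lemma fibO (o : Ob) : measurable [set w | Oo w = o] /\
  mu P [set w | Oo w = o] = W1 o.1 * Wt Q o.2.
Proof.
case: o => o1 o2.
pose oo (h : nat) : {ffun 'I_N -> X N n} :=
  if @insub _ (fun k => (k < g)%N) 'I_g h.-1 is Some hh then o1 hh else o2.
have eqS : [set w | Oo w = (o1, o2)] =
    [set w | forall h, h \in iota 1 g.+1 -> ob K L n h w = oo h].
  apply/seteqP; split => w /=.
    rewrite /Oo; case=> e1 e2 h; rewrite mem_iota => /andP [h1 h2]; rewrite /oo.
    case: insubP => [hh _ hhv|hg].
      by rewrite -e1 /O1 ffunE hhv prednK.
    rewrite -e2; have -> // : h = g.+1.
    move: hg; rewrite -leqNgt => hg; lia.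
  move=> H; rewrite /Oo; congr (_, _).
    apply/ffunP => hh; rewrite ffunE; rewrite (H hh.+1); last first.
      by rewrite mem_iota; apply/andP; split => //; have := ltn_ord hh; lia.
    by rewrite /oo /= valK.
  rewrite (H g.+1); last by rewrite mem_iota; apply/andP; split => //; lia.
  by rewrite /oo /= insubF // ltnn.
have [m1 m2] := cyl_ob WF oo (iota_uniq 1 g.+1).
rewrite eqS; split => //; rewrite m2.
have -> : iota 1 g.+1 = iota 1 g ++ [:: g.+1].
  by rewrite -[in LHS](addn1 g) iotaD add1n.
rewrite big_cat /= big_seq1 /oo /= insubF ?ltnn // /W1.
congr (_ * _).
rewrite [iota 1 g](iotaDl 1 0 g) big_map.
rewrite (_ : iota 0 g = index_iota 0 g); last by rewrite /index_iota subn0.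
rewrite big_mkord.
by apply: eq_bigr => hh _; rewrite /oo /= valK.
Qed.


Definition rX (x : X N n) : R := qn Q n x.1 * (N%:R^-1) ^+ n.

Lemma Wt_prod (o2 : {ffun 'I_N -> X N n}) : Wt Q o2 = \prod_(i : 'I_N) rX (o2 i).
Proof. by []. Qed.

Lemma sum_labels (c : 'I_n.+1) (S : {set 'I_N}) :
  \sum_(l : {ffun 'I_n -> 'I_N} | good S ((c, l) : X N n)) (N%:R^-1 : R) ^+ n
  = (#|S|%:R / N%:R) ^+ c.
Proof.
have cn : (c <= n)%N by rewrite -ltnS ltn_ord.
exact: (@count_labels R N n c S Npos cn).
Qed.

Lemma sum_qn : \sum_(c < n.+1) qn Q n c = 1.
Proof.
rewrite big_ord_recr /= /qn ltnn.
rewrite (eq_bigr (fun c : 'I_n => Q (Some (val c)))); first by rewrite addrC subrK.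
by move=> c _; rewrite /= ltn_ord.
Qed.

Lemma pg_val (S : {set 'I_N}) :
  \sum_(x : X N n | good S x) rX x = \sum_(c < n.+1) qn Q n c * (#|S|%:R / N%:R) ^+ c.
Proof.
rewrite (eq_bigl (fun x : X N n => true && good S (x.1, x.2))); last first.
  by move=> [c l].
rewrite -(pair_big_dep xpredT (fun c l => good S ((c, l) : X N n)) (fun c l => qn Q n c * (N%:R^-1) ^+ n)) /=.
apply: eq_bigr => c _; rewrite -mulr_sumr; congr (_ * _).
exact: sum_labels.
Qed.

Lemma sum_rX : \sum_(x : X N n) rX x = 1.
Proof.
rewrite -(pair_big xpredT xpredT (fun (c : 'I_n.+1) (l : {ffun 'I_n -> 'I_N}) => qn Q n c * (N%:R^-1) ^+ n)) /=.
rewrite -[RHS]sum_qn; apply: eq_bigr => c _; rewrite -mulr_sumr.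
have -> : \sum_(l : {ffun 'I_n -> 'I_N}) (N%:R^-1 : R) ^+ n = 1.
  rewrite (eq_bigl (fun l => good (finset.set0 : {set 'I_N}) ((ord0, l) : X N n))).
    by rewrite sum_labels expr0.
  by move=> l; apply/esym/forallP.
by rewrite mulr1.
Qed.

Lemma sumWt : \sum_(o2 : {ffun 'I_N -> X N n}) Wt Q o2 = 1.
Proof. by rewrite (eq_bigr _ (fun o2 _ => Wt_prod o2)) sum_ffun_prod sum_rX expr1n. Qed.

Lemma sumWt_m (S : {set 'I_N}) (m : nat) :
  \sum_(o2 : {ffun 'I_N -> X N n} | #|nxt S o2| == m) Wt Q o2 =
  'C(N, m)%:R * (\sum_(c < n.+1) qn Q n c * (#|S|%:R / N%:R) ^+ c) ^+ m *
  (1 - \sum_(c < n.+1) qn Q n c * (#|S|%:R / N%:R) ^+ c) ^+ (N - m).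
Proof.
rewrite (eq_bigr _ (fun o2 _ => Wt_prod o2)).
rewrite (binom_ffun _ rX (good S) m) card_ord pg_val.
congr (_ * _ ^+ _).
rewrite -pg_val -[X in X - _]sum_rX [in RHS](bigID (good S)) /=.
by rewrite addrC addrK.
Qed.



Lemma frac_eq (a b : nat) : ((a%:R / N%:R : R) = b%:R / N%:R) <-> a = b.
Proof.
split => [h|->//].
have N0 : (N%:R : R) != 0 by rewrite pnatr_eq0 -lt0n.
by move/(mulIf (invr_neq0 N0))/eqP: h; rewrite eqr_nat => /eqP.
Qed.

Definition ts (h : nat) (w : T) : {set 'I_N} := [set i | tt K L init n h i w]%SET.

Definition pn (x : R) : R := \sum_(c < n.+1) qn Q n c * x ^+ c.

Definition En (xs : nat -> R) : set T :=
  [set w | forall h, (h <= g)%N -> #|ts h w|%:R / N%:R = xs h].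
Definition Fn (m : nat) : set T :=
  [set w | (#|ts g.+1 w|%:R / N%:R : R) = m%:R / N%:R].

Lemma main_n (xs : nat -> R) (m : nat) :
  measurable (En xs) /\ measurable (En xs `&` Fn m) /\
  mu P (En xs `&` Fn m) =
  'C(N, m)%:R * pn (xs g) ^+ m * (1 - pn (xs g)) ^+ (N - m) * mu P (En xs).
Proof.
pose A1 (o1 : {ffun 'I_g -> {ffun 'I_N -> X N n}}) :=
  [forall hh : 'I_g.+1, #|St init o1 hh|%:R / N%:R == xs hh].
have eqE : En xs = [set w | A1 (Oo w).1].
  apply/seteqP; split => w /=.
    move=> H; apply/forallP => hh; rewrite St_tt; last by rewrite -ltnS ltn_ord.
    by apply/eqP; apply: H; rewrite -ltnS ltn_ord.
  move=> H h hg; have := forallP H (Ordinal (hg : (h < g.+1)%N)).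
  by rewrite St_tt //= => /eqP.
have eqEF : En xs `&` Fn m =
    [set w | A1 (Oo w).1 && (#|nxt (St init (Oo w).1 g) (Oo w).2| == m)].
  rewrite eqE; apply/seteqP; split => w /=.
    move=> [h1 h2]; rewrite h1 /=; rewrite St_tt // nxt_ob.
    by apply/eqP/frac_eq.
  move=> /andP [h1 h2]; split => //; rewrite St_tt // nxt_ob in h2.
  by apply/frac_eq/eqP.
have mf := fun o => (fibO o).1.
have [mE muE] := mu_fibF P (fun o : Ob => A1 o.1) mf.
have [mEF muEF] := mu_fibF P (fun o : Ob => A1 o.1 && (#|nxt (St init o.1 g) o.2| == m)) mf.
rewrite eqEF eqE; split => //; split => //.
rewrite muE muEF.
rewrite (eq_bigr (fun o => W1 o.1 * Wt Q o.2)); last by move=> o _; rewrite (fibO o).2.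
rewrite [in RHS](eq_bigr (fun o => W1 o.1 * Wt Q o.2)); last by move=> o _; rewrite (fibO o).2.
rewrite -(pair_big_dep A1 (fun o1 o2 => #|nxt (St init o1 g) o2| == m) (fun o1 o2 => W1 o1 * Wt Q o2)) /=.
rewrite (eq_bigl (fun o : Ob => A1 o.1 && xpredT o.2)); last by move=> o; rewrite andbT.
rewrite -(pair_big_dep A1 (fun _ _ => true) (fun o1 o2 => W1 o1 * Wt Q o2)) /=.
rewrite mulr_sumr; apply: eq_bigr => o1 ho1.
rewrite -!mulr_sumr sumWt_m sumWt mulr1 mulrC.
have := forallP ho1 ord_max; rewrite /= => /eqP ->.
by [].
Qed.

End MainN.

End PartF.
Import PartF.

Module PartG.
Set Implicit Arguments. Unset Strict Implicit. Unset Printing Implicit Defensive.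
Import Order.TTheory GRing.Theory Num.Theory.
Import numFieldNormedType.Exports.
Local Open Scope classical_set_scope.
Local Open Scope ring_scope.

Lemma cvg_pow (R : realType) (f : nat -> R) (a : R) (k : nat) :
  f @ \oo --> a -> (fun n => f n ^+ k) @ \oo --> a ^+ k.
Proof.
move=> hf; elim: k => [|k IH].
  rewrite expr0 (_ : (fun n => f n ^+ 0) = (fun=> 1)); first exact: cvg_cst.
  by apply/funext => n; rewrite expr0.
rewrite exprS (_ : (fun n => f n ^+ k.+1) = (f \* (fun n => f n ^+ k))).
  exact: cvgM.
by apply/funext => n; rewrite /= exprS.
Qed.

Lemma pn_cvg (R : realType) (Q : option nat -> R) (x : R) :
  (forall a, 0 <= Q a) -> Q (Some 0%N) = 0 ->
  Q None + \big[+%R/0%R]_(0 <= k <oo) Q (Some k) = 1 ->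
  (forall n, \sum_(c < n) Q (Some (val c)) <= 1) -> 0 <= x <= 1 ->
  (fun n => \sum_(c < n.+1) qn Q n c * x ^+ c) @ \oo --> pgf Q x.
Proof.
move=> Qge0 Q0 Qs Sq1 /andP [x0 x1].
pose F k := x ^+ k * Q (Some k).
have pnE n : \sum_(c < n.+1) qn Q n c * x ^+ c =
    \sum_(c < n) F c + (1 - \sum_(c < n) Q (Some (val c))) * x ^+ n.
  rewrite big_ord_recr /= /qn ltnn; congr (_ + _); apply: eq_bigr => c _.
  by rewrite ltn_ord mulrC.
have uE n : \sum_(1 <= k < n) F k = \sum_(k < n) F k.
  case: n => [|n]; first by rewrite big_geq // big_ord0.
  by rewrite -(big_mkord xpredT) (big_ltn (ltn0Sn n)) /F Q0 mulr0 add0r.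
have ndv : nondecreasing_seq (fun n => \sum_(k < n) F k).
  apply/nondecreasing_seqP => n; rewrite big_ord_recr /= lerDl /F.
  by rewrite mulr_ge0 // exprn_ge0.
have ubv n : \sum_(k < n) F k <= 1.
  apply: le_trans (Sq1 n); apply: ler_sum => k _; rewrite /F.
  by apply: ler_piMl => //; exact: exprn_ile1.
have cv : cvg ((fun n => \sum_(k < n) F k) @ \oo).
  by apply: nondecreasing_is_cvgn => //; exists 1 => _ [n _ <-]; exact: ubv.
have lE : limn (fun n => \sum_(1 <= k < n) F k) = limn (fun n => \sum_(k < n) F k).
  by rewrite (_ : (fun n => \sum_(1 <= k < n) F k) = (fun n => \sum_(k < n) F k)) //; apply/funext => n; exact: uE.
rewrite /pgf.
case: (x =P 1) => [x1'|xn1].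
  subst x.
  have -> : (fun n => \sum_(c < n.+1) qn Q n c * 1 ^+ c) = (fun=> 1).
    apply/funext => n; rewrite pnE expr1n mulr1.
    rewrite (eq_bigr (fun c : 'I_n => Q (Some (val c)))); last by move=> c _; rewrite /F expr1n mul1r.
    by rewrite addrC subrK.
  have -> : limn (fun n => \sum_(1 <= k < n) 1 ^+ k * Q (Some k)) = 1 - Q None.
    have eS : limn (fun n => \sum_(0 <= k < n) Q (Some k)) = 1 - Q None.
      by rewrite -Qs [Q None + _]addrC addrK.
    rewrite -eS.
    rewrite (_ : (fun n => \sum_(1 <= k < n) 1 ^+ k * Q (Some k)) = (fun n => \sum_(0 <= k < n) Q (Some k))) //.
    apply/funext => n; rewrite (uE n) big_mkord; apply: eq_bigr => c _; by rewrite /F expr1n mul1r.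
  by rewrite subrK; exact: cvg_cst.
rewrite ?addr0.
have -> : (fun n => \sum_(c < n.+1) qn Q n c * x ^+ c) =
    (fun n => \sum_(k < n) F k + (1 - \sum_(c < n) Q (Some (val c))) * x ^+ n).
  by apply/funext => n; rewrite pnE.
rewrite -[limn _]addr0; apply: cvgD.
  by rewrite /F lE; exact: cv.
apply: (@squeeze_cvgr _ _ _ _ (fun=> 0) (fun n => x ^+ n)).
- near=> n; apply/andP; split.
    by rewrite mulr_ge0 ?exprn_ge0 // subr_ge0.
  apply: ler_piMl; first exact: exprn_ge0.
  by rewrite lerBlDr lerDl sumr_ge0.
- exact: cvg_cst.
- apply: cvg_expr; rewrite ger0_norm // lt_neqAle x1 andbT.
  exact/eqP.
Unshelve. all: by end_near.
Qed.

End PartG.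
Import PartG.

Module PartH.
Import Order.TTheory GRing.Theory Num.Theory.
Import numFieldNormedType.Exports.
Local Open Scope classical_set_scope.
Local Open Scope ring_scope.

Lemma card_cls (N : nat) (b : 'I_N -> bool) :
  #|[set i : 'I_N | b i]| = #|[set i | b i]%SET|.
Proof.
apply: eq_card => i; rewrite inE; apply/idP/idP => [/set_mem //|h].
exact: mem_set.
Qed.

Lemma Sq_le1 (R : realType) (d : measure_display) (T : measurableType d)
  (P : probability T R) (N : nat) (Q : option nat -> R)
  (K : nat -> 'I_N -> T -> option nat) (L : nat -> 'I_N -> nat -> T -> 'I_N) :
  (0 < N)%N -> WF_iid P Q K L -> forall n, \sum_(c < n) Q (Some (val c)) <= 1.
Proof.
move=> Npos WF n.
have h := @cylgen R d T P N Q K L WF n [::] (fun u => u.1.2) (fun _ => n)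
  [:: (1%N, Ordinal Npos)] [::] (fun _ => None) erefl erefl (fun v _ => leqnn n).
rewrite big_nil big_seq1 /= mul1r expr0 mulr1 /qn ltnn in h.
by have := mu_ge0 P (Zset K L n [::] (fun=> None) [:: (1%N, Ordinal Npos)] (fun=> n) [::] (fun u => u.1.2)); rewrite h subr_ge0.
Qed.


End PartH.
Import PartH.

Unset Implicit Arguments. Set Strict Implicit. Set Printing Implicit Defensive.
Import Order.TTheory GRing.Theory Num.Theory.
Import numFieldNormedType.Exports.
Local Open Scope classical_set_scope.
Local Open Scope ring_scope.

Theorem proposition2p2 (R : realType) (d : measure_display) (T : measurableType d)
  (P : probability T R) (N : nat) (Q : option nat -> R)
  (K : nat -> 'I_N -> T -> option nat) (L : nat -> 'I_N -> nat -> T -> 'I_N)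
  (init : 'I_N -> bool) :
  (0 < N)%N ->
  (forall a, 0 <= Q a) ->
  Q (Some 0%N) = 0 ->
  Q None + \big[+%R/0%R]_(0 <= k <oo) Q (Some k) = 1 ->
  WF_iid P Q K L ->
  forall (g : nat) (xs : nat -> R) (m : nat), (m <= N)%N ->
    let E := [set w | forall h, (h <= g)%N -> freq0 R init K L h w = xs h] in
    P (E `&` [set w | freq0 R init K L g.+1 w = m%:R / N%:R])
    = ((('C(N, m))%:R * pgf Q (xs g) ^+ m * (1 - pgf Q (xs g)) ^+ (N - m))%:E * P E)%E.
Proof.
move=> Npos Qge0 Q0 Qs WF g xs m mN E.
set F := [set w | freq0 R init K L g.+1 w = m%:R / N%:R].
have frE h w : freq0 R init K L h w =
    #|[set i | type0 init K L h i w]%SET|%:R / N%:R by rewrite /freq0 card_cls.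
have ev w : exists n0, forall n, (n0 <= n)%N -> forall h, (h <= g.+1)%N ->
    ts K L init n h w = [set i | type0 init K L h i w]%SET.
  have [n0 H] := tt_ev K L init w g.+1.
  by exists n0 => n hn h hh; apply/setP => i; rewrite !inE H.
have evE w : exists n0, forall n, (n0 <= n)%N -> (En K L init n g xs w <-> E w).
  have [n0 H] := ev w; exists n0 => n hn; rewrite /En /E /=.
  split => H1 h hh; have := H1 h hh; rewrite frE H ?(leq_trans hh) //.
have evEF w : exists n0, forall n, (n0 <= n)%N ->
    ((En K L init n g xs `&` Fn R K L init n g m) w <-> (E `&` F) w).
  have [n0 H] := ev w; exists n0 => n hn; rewrite /En /E /Fn /F /=.
  rewrite frE H //.
  split => -[H1 H2]; split => // h hh; have := H1 h hh; rewrite frE H ?(leq_trans hh) //.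
have [mE cvE] := mu_cvg P (fun n => (main_n WF init n g Npos xs m).1) evE.
have [mEF cvEF] := mu_cvg P (fun n => (main_n WF init n g Npos xs m).2.1) evEF.
case: (pselect (exists w, E w)) => [[w0 Ew0]|nE]; last first.
  have E0 : E = set0 by apply/seteqP; split => w // Ew; apply: nE; exists w.
  by rewrite E0 set0I measure0 mule0.
have xg : 0 <= xs g <= 1.
  rewrite -(Ew0 g (leqnn g)) frE; apply/andP; split.
    by rewrite divr_ge0.
  rewrite ler_pdivrMr ?ltr0n // mul1r ler_nat.
  by apply: leq_trans (max_card _) _; rewrite card_ord.
have cpn := pn_cvg Qge0 Q0 Qs (@Sq_le1 R d T P N Q K L Npos WF) xg.
have ccv : (fun n => 'C(N, m)%:R * pn Q n (xs g) ^+ m * (1 - pn Q n (xs g)) ^+ (N - m)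
    * mu P (En K L init n g xs)) @ \oo -->
    'C(N, m)%:R * pgf Q (xs g) ^+ m * (1 - pgf Q (xs g)) ^+ (N - m) * mu P E.
  apply: cvgM => //; apply: cvgM.
    by apply: cvgM; [exact: cvg_cst | exact: cvg_pow].
  by apply: cvg_pow; apply: cvgB => //; exact: cvg_cst.
have eqseq : (fun n => mu P (En K L init n g xs `&` Fn R K L init n g m)) =
    (fun n => 'C(N, m)%:R * pn Q n (xs g) ^+ m * (1 - pn Q n (xs g)) ^+ (N - m)
    * mu P (En K L init n g xs)).
  by apply/funext => n; rewrite (main_n WF init n g Npos xs m).2.2.
rewrite eqseq in cvEF.
have hu := cvg_unique _ cvEF ccv.
  by rewrite (muE P mEF) (muE P mE) hu.
Unshelve. all: exact: norm_hausdorff.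
Qed.
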